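(* Let $M$ be a right $R$-module with $S=\mathrm{End}_R(M)$. Consider the statements: (i) $M$ is an abelian Rickart module; (ii) $M$ is a centrally endo-AIP module; (iii) $M$ is an endo-AIP module. Then (i) $\Rightarrow$ (ii) and (ii) $\Rightarrow$ (iii). Neither converse holds in general: there exist modules satisfying (ii) but not (i), and modules satisfying (iii) but not (ii).
   Context: Rings are associative with identity; modules are unitary right modules. For $N\le M$, $l_S(N)=\{\phi\in S:\phi(N)=0\}$. A submodule $N$ is fully invariant if $\phi(N)\subseteq N$ for all $\phi\in S$. An ideal $I$ of a ring $A$ is right s-unital if for every $a\in I$ there is $x\in I$ with $ax=a$; it is centrally s-unital if for every $a\in I$ there is an element $z\in I$ central in $A$ with $az=a$. $M$ is centrally endo-AIP if $l_S(N)$ is a centrally s-unital ideal of $S$ for every fully invariant submodule $N$ of $M$; $M$ is endo-AIP if $l_S(N)$ is a right s-unital ideal of $S$ for every fully invariant submodule $N$. $M$ is Rickart if $\ker\phi$ is a direct summand of $M$ for every $\phi\in S$; $M$ is abelian if every idempotent of $S$ is central in $S$. *)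

(* Defs.v *)
(* Right R-modules are encoded as left modules over the
   converse ring R^c (lmodType R^c), so that  x *: (y *: m) = (y * x) *: m  in R,
   i.e. the scalar action m.r := r *: m is a right action. *)
From HB Require Import structures.
From mathcomp Require Import all_boot all_order all_algebra.
Set Implicit Arguments. Unset Strict Implicit. Unset Printing Implicit Defensive.
Import GRing.Theory.
Local Open Scope ring_scope.

Section ModuleDefs.
Variables (A : pzRingType) (M : lmodType A).

Definition endo (phi : M -> M) : Prop :=
  forall (a : A) (x y : M), phi (a *: x + y) = a *: phi x + phi y.

(* product in S: (phi * psi)(m) = phi (psi m); equality in S is pointwise *)
Definition endo_eq (phi psi : M -> M) : Prop := forall m, phi m = psi m.

Definition submodule (N : M -> Prop) : Prop :=
  N 0 /\ forall (a : A) (x y : M), N x -> N y -> N (a *: x + y).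

Definition fully_invariant (N : M -> Prop) : Prop :=
  submodule N /\ forall phi, endo phi -> forall x, N x -> N (phi x).

Definition lS (N : M -> Prop) (phi : M -> M) : Prop :=
  endo phi /\ forall x, N x -> phi x = 0.

Definition central_in_S (z : M -> M) : Prop :=
  forall psi, endo psi -> endo_eq (z \o psi) (psi \o z).

Definition ideal_S (I : (M -> M) -> Prop) : Prop :=
  [/\ (forall phi, I phi -> endo phi),
      I (fun _ => 0),
      (forall phi psi, I phi -> I psi -> I (fun m => phi m - psi m)),
      (forall phi psi, I phi -> endo psi -> I (psi \o phi)) &
      (forall phi psi, I phi -> endo psi -> I (phi \o psi))].

Definition right_s_unital (I : (M -> M) -> Prop) : Prop :=
  ideal_S I /\ forall a, I a -> exists x, I x /\ endo_eq (a \o x) a.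

Definition centrally_s_unital (I : (M -> M) -> Prop) : Prop :=
  ideal_S I /\
  forall a, I a -> exists z, [/\ I z, central_in_S z & endo_eq (a \o z) a].

Definition centrally_endo_AIP : Prop :=
  forall N, fully_invariant N -> centrally_s_unital (lS N).

Definition endo_AIP : Prop :=
  forall N, fully_invariant N -> right_s_unital (lS N).

Definition direct_summand (N : M -> Prop) : Prop :=
  submodule N /\
  exists K, [/\ submodule K,
     (forall m, N m -> K m -> m = 0) &
     (forall m, exists n k, [/\ N n, K k & m = n + k])].

Definition kernel (phi : M -> M) : M -> Prop := fun m => phi m = 0.

Definition rickart : Prop :=
  forall phi, endo phi -> direct_summand (kernel phi).

Definition abelian_module : Prop :=
  forall e, endo e -> endo_eq (e \o e) e -> central_in_S e.

End ModuleDefs.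

(* Main.v *)
Require Import Defs.
From HB Require Import structures.
From mathcomp Require Import all_boot all_order all_algebra.
From mathcomp Require Import ring zify.
From Stdlib Require Import ClassicalEpsilon Classical.
Set Implicit Arguments. Unset Strict Implicit. Unset Printing Implicit Defensive.
Import GRing.Theory Num.Theory.
Local Open Scope ring_scope.

Section Gen.
Variables (A : pzRingType) (M : lmodType A).
Implicit Types (phi psi : M -> M) (N : M -> Prop).

Lemma endoD phi : endo phi -> forall x y, phi (x + y) = phi x + phi y.
Proof. by move=> h x y; rewrite -[x in LHS]scale1r h scale1r. Qed.

Lemma endo0 phi : endo phi -> phi 0 = 0.
Proof. by move=> h; apply/(addrI (phi 0)); rewrite -endoD // !addr0. Qed.

Lemma endoZ phi : endo phi -> forall a x, phi (a *: x) = a *: phi x.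
Proof. by move=> h a x; rewrite -[a *: x]addr0 h endo0 // addr0. Qed.

Lemma endoN phi : endo phi -> forall x, phi (- x) = - phi x.
Proof. by move=> h x; rewrite -scaleN1r endoZ // scaleN1r. Qed.

Lemma endoB phi : endo phi -> forall x y, phi (x - y) = phi x - phi y.
Proof. by move=> h x y; rewrite endoD // endoN. Qed.

Lemma endo_comp phi psi : endo phi -> endo psi -> endo (psi \o phi).
Proof. by move=> h1 h2 a x y /=; rewrite h1 h2. Qed.

Lemma endo_id : endo (@id M).
Proof. by []. Qed.

Lemma endo_zero : endo (fun _ : M => 0 : M).
Proof. by move=> a x y; rewrite scaler0 addr0. Qed.

Lemma endo_sub phi psi : endo phi -> endo psi -> endo (fun m => phi m - psi m).
Proof.
move=> h1 h2 a x y; rewrite h1 h2 scalerBr.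
by rewrite opprD !addrA; congr (_ + _); rewrite -!addrA; congr (_ + _); rewrite addrC.
Qed.

Lemma submodB N : submodule N -> forall x y, N x -> N y -> N (x - y).
Proof.
move=> [h0 h] x y hx hy; rewrite addrC -scaleN1r; exact: h.
Qed.

Lemma submodZ N : submodule N -> forall a x, N x -> N (a *: x).
Proof. move=> [h0 h] a x hx; rewrite -[a *: x]addr0; exact: h. Qed.

Lemma submodD N : submodule N -> forall x y, N x -> N y -> N (x + y).
Proof. move=> [h0 h] x y hx hy; rewrite -[x]scale1r; exact: h. Qed.

Lemma ideal_lS N : fully_invariant N -> ideal_S (lS N).
Proof.
move=> [sN fN]; split.
- by move=> phi [].
- by split; [exact: endo_zero|].
- move=> phi psi [h1 k1] [h2 k2]; split; first exact: endo_sub.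
  by move=> x Nx; rewrite k1 // k2 // subrr.
- move=> phi psi [h1 k1] h2; split; first exact: endo_comp.
  by move=> x Nx /=; rewrite k1 // endo0.
- move=> phi psi [h1 k1] h2; split; first exact: endo_comp.
  by move=> x Nx /=; rewrite k1 //; apply: fN.
Qed.

Lemma rickart_unit : rickart M -> forall a, endo a ->
  exists z : M -> M, [/\ endo z, (forall x, a x = 0 -> z x = 0),
     endo_eq (z \o z) z & endo_eq (a \o z) a].
Proof.
move=> rk a ha; have [sN [K [sK NK dec]]] := rk a ha.
have H m : {n | kernel a n /\ K (m - n)}.
  apply: constructive_indefinite_description.
  have [n [k [Nn Kk ->]]] := dec m; exists n; split => //.
  by rewrite addrC addKr.
pose p m := proj1_sig (H m).
have pN m : kernel a (p m) by case: (proj2_sig (H m)).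
have pK m : K (m - p m) by case: (proj2_sig (H m)).
have uniq m n : kernel a n -> K (m - n) -> p m = n.
  move=> Nn Kn; apply/eqP; rewrite -subr_eq0; apply/eqP.
  apply: NK; first exact: submodB.
  have -> : p m - n = (m - n) - (m - p m) by rewrite opprB [RHS]addrC addrA subrK.
  exact: submodB.
pose z m := m - p m.
have pE m : p m + z m = m by rewrite /z addrC subrK.
have hp : endo p.
  move=> c x y; apply: uniq.
    exact: submodD sN _ _ (submodZ sN _ (pN x)) (pN y).
  have -> : c *: x + y - (c *: p x + p y) = c *: (x - p x) + (y - p y).
    by rewrite scalerBr opprD !addrA; congr (_ + _); rewrite -!addrA; congr (_ + _); rewrite addrC.
  by case: sK => _ hK; apply: hK.
have hz : endo z by apply: endo_sub.
exists z; split => //.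
- move=> x ax; have e : p x = x.
    by apply: uniq => //; rewrite subrr; case: sK.
  by rewrite /z e subrr.
- move=> m /=; have e : p (z m) = 0.
    by apply: uniq; [case: sN | rewrite subr0; exact: pK].
  by rewrite {1}/z e subr0.
- by move=> m /=; rewrite /z endoB // (pN m) subr0.
Qed.

Lemma part1 : abelian_module M /\ rickart M -> centrally_endo_AIP M.
Proof.
move=> [ab rk] N fN; split; first exact: ideal_lS.
move=> a [ha ka]; have [z [hz kz zz az]] := rickart_unit rk ha.
exists z; split => //; [split => // x Nx; apply: kz; exact: ka|exact: ab].
Qed.

Lemma rickart_AIP : rickart M -> endo_AIP M.
Proof.
move=> rk N fN; split; first exact: ideal_lS.
move=> a [ha ka]; have [z [hz kz zz az]] := rickart_unit rk ha.
by exists z; split => //; split => // x Nx; apply: kz; exact: ka.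
Qed.

Lemma part2 : centrally_endo_AIP M -> endo_AIP M.
Proof.
move=> h N fN; have [hI hu] := h N fN; split => // a Ia.
by have [z [Iz _ az]] := hu a Ia; exists z.
Qed.
End Gen.

Section Gen2.
Variables (A : pzRingType) (M : lmodType A).
Lemma ds_idem (P : M -> Prop) (e : M -> M) : endo e -> (forall m, e (e m) = e m) ->
  (forall m, P m <-> e m = m) -> direct_summand P.
Proof.
move=> he ee hP; split.
  split; first by apply/hP; rewrite endo0.
  by move=> a x y /hP Px /hP Py; apply/hP; rewrite he Px Py.
exists (fun m => e m = 0); split.
- split; first by rewrite endo0.
  by move=> a x y ex ey; rewrite he ex ey scaler0 addr0.
- by move=> m /hP em ez; rewrite -em.
- move=> m; exists (e m), (m - e m); split.
  + exact: (proj2 (hP _) (ee m)).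
  + by rewrite endoB // ee subrr.
  + by rewrite addrC subrK.
Qed.
End Gen2.

Definition F := rat^c.
Definition M3 := (F^o * F^o)%type.
Definition mk3 (x y : F) : M3 := (x, y).

Lemma M3E (u : M3) : u = mk3 u.1 u.2. Proof. by case: u. Qed.
Lemma add3E (x y x' y' : F) : mk3 x y + mk3 x' y' = mk3 (x + x') (y + y'). Proof. by []. Qed.
Lemma scale3E (a x y : F) : a *: mk3 x y = mk3 (a * x) (a * y). Proof. by []. Qed.
Lemma zero3E : (0 : M3) = mk3 0 0. Proof. by []. Qed.

Lemma endo3 (f : F -> F -> M3) :
  (forall a x y x' y', f (a * x + x') (a * y + y') = a *: f x y + f x' y') ->
  endo (fun v : M3 => f v.1 v.2).
Proof. by move=> h a [x y] [x' y']; rewrite /= -h. Qed.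

Lemma trans3 (x y : M3) : x <> 0 -> exists phi, endo phi /\ phi x = y.
Proof.
case: x => x1 x2 nx.
have [h1|h1] := eqVneq x1 0.
  have h2 : x2 != 0 by apply/eqP => h2; apply: nx; rewrite h1 h2.
  exists (fun v : M3 => (((v.2 : F) / (x2 : F)) : F) *: y); split; last by rewrite /= (_ : x2 / x2 = 1) ?scale1r //; first [exact: (@mulfV rat^c) | exact: (@mulVf rat) | (rewrite mulrV // unitfE) | exact: (@mulVf rat _ h2)].
  move=> a [u v] [u' v'] /=; rewrite scalerA -scalerDl; congr (_ *: _).
  have -> : a *: v = a * (v : F) by [].
  ring.
exists (fun v : M3 => (((v.1 : F) / (x1 : F)) : F) *: y); split; last by rewrite /= (_ : x1 / x1 = 1) ?scale1r //; first [exact: (@mulfV rat^c) | exact: (@mulVf rat) | (rewrite mulrV // unitfE) | exact: (@mulVf rat _ h2)].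
move=> a [u v] [u' v'] /=; rewrite scalerA -scalerDl; congr (_ *: _).
have -> : a *: u = a * (u : F) by [].
ring.
Qed.

Lemma part3 : centrally_endo_AIP M3 /\ ~ (abelian_module M3 /\ rickart M3).
Proof.
split.
  move=> N fN; split; first exact: ideal_lS.
  move=> a [ha ka].
  case: (classic (forall m, a m = 0)) => [a0|].
    exists (fun _ => 0); split.
    - by split; [exact: endo_zero|].
    - by move=> psi hpsi m /=; rewrite endo0.
    - by move=> m /=; rewrite a0.
  move=> /not_all_ex_not [m0 am0].
  have N0 : forall x, N x -> x = 0.
    move=> x Nx; apply: NNPP => nx; apply: am0.
    have [phi [hphi <-]] := trans3 m0 nx.
    by apply: ka; case: fN => _ fi; apply: fi.
  exists id; split.
  - by split; [exact: endo_id| move=> x /N0 ->].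
  - by move=> psi _ m.
  - by move=> m.
move=> [ab _].
pose e := fun v : M3 => mk3 v.1 0.
pose psi := fun v : M3 => mk3 v.2 v.1.
have he : endo e.
  move=> a [u v] [u' v']; rewrite /e /mk3 /=; congr pair.
  by rewrite -[RHS]/(a *: (0:F^o) + 0) scaler0 addr0.
have hpsi : endo psi.
  by move=> a [u v] [u' v']; rewrite /psi /mk3 /=.
have := ab e he (fun v => erefl) psi hpsi (mk3 0 1).
rewrite /e /psi /= => /(congr1 fst) /= /eqP.
by rewrite oner_eq0.
Qed.

Definition Zc := int^c.
Definition Qz : Type := rat.
HB.instance Definition _ := GRing.Zmodule.on Qz.
Definition qzscale (a : Zc) (q : Qz) : Qz := (((a : int)%:~R : rat) * (q : rat) : rat).

Lemma mulcE (a b : Zc) : a * b = (b : int) * (a : int) :> int. Proof. by []. Qed.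

Fact qz_scaleA a b v : qzscale a (qzscale b v) = qzscale (a * b) v.
Proof. by rewrite /qzscale mulcE intrM mulrA [X in X * _]mulrC. Qed.
Fact qz_scale1 : left_id 1 qzscale.
Proof. by move=> v; rewrite /qzscale mul1r. Qed.
Fact qz_scaleDr : right_distributive qzscale +%R.
Proof. by move=> a u v; rewrite /qzscale mulrDr. Qed.
Fact qz_scaleDl v : {morph qzscale^~ v: a b / a + b}.
Proof. by move=> a b; rewrite /qzscale intrD mulrDl. Qed.
HB.instance Definition _ := GRing.Zmodule_isLmodule.Build Zc Qz
  qz_scaleA qz_scale1 qz_scaleDr qz_scaleDl.

Definition M4 := (Zc^o * Qz)%type.
Definition mk (n : int) (q : rat) : M4 := (n : Zc^o, q : Qz).
Definition f1 (v : M4) : int := v.1.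
Definition f2 (v : M4) : rat := v.2.

Lemma mkE (v : M4) : v = mk (f1 v) (f2 v). Proof. by case: v. Qed.
Lemma mk_inj n q n' q' : mk n q = mk n' q' -> n = n' /\ q = q'.
Proof. by case. Qed.
Lemma f1mk n q : f1 (mk n q) = n. Proof. by []. Qed.
Lemma f2mk n q : f2 (mk n q) = q. Proof. by []. Qed.
Lemma f1D u v : f1 (u + v) = f1 u + f1 v. Proof. by []. Qed.
Lemma f2D u v : f2 (u + v) = f2 u + f2 v. Proof. by []. Qed.
Lemma f1Z (a : int) v : f1 ((a : Zc) *: v) = a * f1 v.
Proof. by rewrite /f1 /= mulrC. Qed.
Lemma f2Z (a : int) v : f2 ((a : Zc) *: v) = a%:~R * f2 v.
Proof. by []. Qed.
Lemma f10 : f1 0 = 0. Proof. by []. Qed.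
Lemma f20 : f2 0 = 0. Proof. by []. Qed.
Lemma M4eq u v : f1 u = f1 v -> f2 u = f2 v -> u = v.
Proof. by move=> h1 h2; rewrite (mkE u) (mkE v) h1 h2. Qed.
Lemma mk0 : mk 0 0 = 0. Proof. by []. Qed.

Lemma endo4 (phi : M4 -> M4) :
  (forall (a : int) u v, phi ((a : Zc) *: u + v) = (a : Zc) *: phi u + phi v) -> endo phi.
Proof. by move=> h a; apply: h. Qed.

Lemma nodiv (t u : int) : t = (`|t| + 1) * u -> t = 0.
Proof.
move=> h; have [u0|u0] := eqVneq u 0; first by rewrite h u0 mulr0.
have h2 : `|t| = (`|t| + 1) * `|u|.
  by rewrite {1}h normrM (ger0_norm (_ : 0 <= `|t| + 1)) // addr_ge0.
have h3 : 0 < `|u| by rewrite normr_gt0.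
have h4 : 0 <= `|t| by [].
move: h2 h3 h4; set a := `|t|; set b := `|u| => h2 h3 h4.
nia.
Qed.

Section Endo4.
Variable phi : M4 -> M4.
Hypothesis hphi : endo phi.

Lemma phiZ (a : int) v : phi ((a : Zc) *: v) = (a : Zc) *: phi v.
Proof. exact: endoZ. Qed.

Lemma L1 q : f1 (phi (mk 0 q)) = 0.
Proof.
set t := f1 (phi (mk 0 q)).
pose k : int := `|t| + 1.
have k0 : k != 0 by rewrite /k; lia.
have e : mk 0 q = (k : Zc) *: mk 0 (q / k%:~R).
  apply: M4eq; first by rewrite f1Z !f1mk mulr0.
  by rewrite f2Z !f2mk mulrC divfK // intr_eq0.
apply: (@nodiv t (f1 (phi (mk 0 (q / k%:~R))))).
by rewrite /t {1}e phiZ f1Z.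
Qed.

Lemma L2 q : f2 (phi (mk 0 q)) = q * f2 (phi (mk 0 1)).
Proof.
have g (k : int) x : f2 (phi (mk 0 (k%:~R * x))) = k%:~R * f2 (phi (mk 0 x)).
  have -> : mk 0 (k%:~R * x) = (k : Zc) *: mk 0 x.
    by apply: M4eq; rewrite ?f1Z ?f2Z ?f1mk ?f2mk ?mulr0.
  by rewrite phiZ f2Z.
have d0 : ((denq q)%:~R : rat) != 0 by rewrite intr_eq0 denq_neq0.
apply: (mulIf d0).
rewrite [LHS]mulrC -g [_%:~R * q]mulrC -numqE -[X in mk 0 X]mulr1 g.
by rewrite numqE mulrAC.
Qed.

Definition m4 := f1 (phi (mk 1 0)).
Definition r4 := f2 (phi (mk 1 0)).
Definition s4 := f2 (phi (mk 0 1)).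

Lemma L3 v : phi v = mk (f1 v * m4) ((f1 v)%:~R * r4 + f2 v * s4).
Proof.
have ev : v = (f1 v : Zc) *: mk 1 0 + mk 0 (f2 v).
  apply: M4eq; first by rewrite f1D f1Z !f1mk mulr1 addr0.
  by rewrite f2D f2Z !f2mk mulr0 add0r.
rewrite {1}ev endoD // phiZ.
apply: M4eq.
  by rewrite f1D f1Z L1 addr0 f1mk /m4.
by rewrite f2D f2Z L2 f2mk /r4 /s4.
Qed.
End Endo4.

Definition eB (v : M4) : M4 := mk 0 (f2 v).
Definition eG (c : rat) (v : M4) : M4 := mk (f1 v) ((f1 v)%:~R * c).

Lemma eB_endo : endo eB.
Proof.
move=> a u w; apply: M4eq; rewrite /eB !(f1D, f2D, f1Z, f2Z, f1mk, f2mk) //.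
by rewrite mulr0 addr0.
Qed.

Lemma eG_endo c : endo (eG c).
Proof.
move=> a u w; apply: M4eq; rewrite /eG !(f1D, f2D, f1Z, f2Z, f1mk, f2mk) //.
rewrite intrD intrM; ring.
Qed.

Lemma eB_idem v : eB (eB v) = eB v. Proof. by rewrite /eB f2mk. Qed.
Lemma eG_idem c v : eG c (eG c v) = eG c v. Proof. by rewrite /eG f1mk. Qed.

Lemma eB_fix v : eB v = v <-> f1 v = 0.
Proof.
split; first by move/(congr1 f1); rewrite /eB f1mk.
by move=> h; apply: M4eq; rewrite /eB ?f1mk ?f2mk.
Qed.

Lemma eG_fix c v : eG c v = v <-> f2 v = (f1 v)%:~R * c.
Proof.
split; first by move/(congr1 f2); rewrite /eG f2mk.
by move=> h; apply: M4eq; rewrite /eG ?f1mk ?f2mk.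
Qed.

Lemma e0_fix v : (fun _ : M4 => 0 : M4) v = v <-> f1 v = 0 /\ f2 v = 0.
Proof.
split; first by move=> <-.
by case=> h1 h2; apply: M4eq.
Qed.

Lemma rickart4 : rickart M4.
Proof.
move=> phi hphi.
have ker v : kernel phi v <-> (f1 v * m4 phi = 0 /\ (f1 v)%:~R * r4 phi + f2 v * s4 phi = 0).
  rewrite /kernel (L3 hphi v) -mk0; split; [by move/mk_inj | by case=> -> ->].
move: ker; set m := m4 phi; set r := r4 phi; set s := s4 phi => ker.
have [m0|m0] := eqVneq m 0; have [s0|s0] := eqVneq s 0.
- have [r0|r0] := eqVneq r 0.
    apply: (ds_idem (@endo_id _ M4) (fun _ => erefl)) => v.
    apply: (iff_trans (ker v)); split => // _.
    by rewrite m0 r0 s0 !mulr0 addr0.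
  apply: (ds_idem eB_endo eB_idem) => v.
  apply: (iff_trans (ker v)); apply: (iff_trans _ (iff_sym (eB_fix v))).
  rewrite m0 s0 !mulr0 addr0; split; first by case=> _ /eqP; rewrite mulf_eq0 (negbTE r0) orbF intr_eq0 => /eqP.
  by move=> ->; rewrite mulr0z mul0r.
- pose c := - r / s.
  apply: (ds_idem (eG_endo c) (eG_idem c)) => v.
  apply: (iff_trans (ker v)); apply: (iff_trans _ (iff_sym (eG_fix c v))).
  rewrite m0 mulr0; split.
    case=> _ h.
    have e1 : - ((f1 v)%:~R * r) = f2 v * s.
      by apply/eqP; rewrite eq_sym -subr_eq0 opprK addrC h.
    by rewrite /c mulrA mulrN e1 mulfK.
  by move=> h; split => //; rewrite h /c -mulrA divfK // mulrN addrN.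
- apply: (ds_idem eB_endo eB_idem) => v.
  apply: (iff_trans (ker v)); apply: (iff_trans _ (iff_sym (eB_fix v))).
  rewrite s0 mulr0 addr0; split.
    by case=> /eqP; rewrite mulf_eq0 (negbTE m0) orbF => /eqP.
  by move=> ->; rewrite mul0r mulr0z mul0r.
- apply: (ds_idem (@endo_zero _ M4) (fun _ => erefl)) => v.
  apply: (iff_trans (ker v)); apply: (iff_trans _ (iff_sym (e0_fix v))).
  split.
    case=> /eqP; rewrite mulf_eq0 (negbTE m0) orbF => /eqP x0.
    rewrite x0 mulr0z mul0r add0r => /eqP; rewrite mulf_eq0 (negbTE s0) orbF => /eqP.
    by [].
  by case=> -> ->; rewrite mul0r mulr0z !mul0r addr0.
Qed.

Definition N4 (v : M4) : Prop := f1 v = 0.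

Lemma N4_fi : fully_invariant N4.
Proof.
split.
  split; first by [].
  by move=> a x y; rewrite /N4 f1D f1Z => -> ->; rewrite mulr0 addr0.
move=> phi hphi x; rewrite /N4 => hx.
by rewrite (mkE x) hx L1.
Qed.

Lemma part4 : endo_AIP M4 /\ ~ centrally_endo_AIP M4.
Proof.
split; first exact: (rickart_AIP rickart4).
move=> h; have [_ hu] := h N4 N4_fi.
pose a := fun v : M4 => mk (f1 v) 0.
have ha : endo a.
  move=> b u w; apply: M4eq; rewrite /a !(f1D, f2D, f1Z, f2Z, f1mk, f2mk) //.
  by rewrite mulr0 addr0.
have ka : forall x, N4 x -> a x = 0 by move=> x hx; rewrite /a hx.
have [z [[hz kz] cz az]] := hu a (conj ha ka).
pose psi := fun v : M4 => mk 0 (f1 v)%:~R.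
have hpsi : endo psi.
  move=> b u w; apply: M4eq; rewrite /psi !(f1D, f2D, f1Z, f2Z, f1mk, f2mk) ?mulr0 ?addr0 //.
  by rewrite intrD intrM.
have c := cz psi hpsi (mk 1 0); rewrite /= in c.
have e1 : psi (mk 1 0) = mk 0 1 by rewrite /psi f1mk.
have e2 : z (mk 0 1) = 0 by apply: kz; rewrite /N4 f1mk.
have e3 : f1 (z (mk 1 0)) = 1.
  by have := az (mk 1 0); rewrite /= /a => /mk_inj [-> _]; rewrite f1mk.
move: c; rewrite e1 e2 /psi e3 => /(congr1 f2); rewrite f20 f2mk => /eqP.
by rewrite eq_sym oner_eq0.
Qed.

Theorem proposition2p2 :
  (forall (R : pzRingType) (M : lmodType R^c),
      abelian_module M /\ rickart M -> centrally_endo_AIP M) /\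
  (forall (R : pzRingType) (M : lmodType R^c),
      centrally_endo_AIP M -> endo_AIP M) /\
  (exists (R : pzRingType) (M : lmodType R^c),
      centrally_endo_AIP M /\ ~ (abelian_module M /\ rickart M)) /\
  (exists (R : pzRingType) (M : lmodType R^c),
      endo_AIP M /\ ~ centrally_endo_AIP M).
Proof.
split; first by move=> R M; exact: part1.
split; first by move=> R M; exact: part2.
split.
  by exists rat, M3; exact: part3.
by exists int, M4; exact: part4.
Qed.
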